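(* Let $a>b>0$ and consider the ellipse $E:\ \frac{x^2}{a^2}+\frac{y^2}{b^2}=1$. For a point $A$ of the plane let $n(A)$ denote the number of points $B\in E$ such that $A$ lies on the normal line to $E$ at $B$. Put $$x_0=\sqrt{\frac{a^4(a^2-2b^2)^3}{(a^2-b^2)(a^2+b^2)^3}},\qquad y_0=\sqrt{\frac{b^4(2a^2-b^2)^3}{(a^2-b^2)(a^2+b^2)^3}}.$$ Then: (1) If $a^2>2b^2$, the four points $(\pm x_0,\pm y_0)$ (all sign combinations) lie on $E$ and divide $E$ into four arcs such that $n(A)=4$ for the points $A$ of some of these arcs and $n(A)=2$ for the points $A$ of the others. (2) If $a^2\le 2b^2$, then $n(A)=2$ for every point $A\in E$.
   Context: For $A\in E$ the point $B=A$ itself is counted in $n(A)$. The points $(\pm x_0,\pm y_0)$ are the intersection points of $E$ with the astroid $\sqrt[3]{a^2X^2}+\sqrt[3]{b^2Y^2}=\sqrt[3]{(a^2-b^2)^2}$ (the evolute of $E$). *)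

(* Defs.v *)
From Stdlib Require Import Reals List.
Open Scope R_scope.

Definition pt := (R * R)%type.

Definition on_ellipse (a b : R) (P : pt) : Prop :=
  fst P ^ 2 / a ^ 2 + snd P ^ 2 / b ^ 2 = 1.

(* A lies on the normal line to E at B = (u,v): the line through B with
   direction the gradient (u/a^2, v/b^2) of x^2/a^2 + y^2/b^2. *)
Definition on_normal (a b : R) (B A : pt) : Prop :=
  exists t : R, fst A = fst B + t * (fst B / a ^ 2)
             /\ snd A = snd B + t * (snd B / b ^ 2).

Definition normal_count (a b : R) (A : pt) (k : nat) : Prop :=
  exists l : list pt, NoDup l /\ length l = k /\
    (forall B : pt, In B l <-> (on_ellipse a b B /\ on_normal a b B A)).

Definition x0 (a b : R) : R :=
  sqrt (a ^ 4 * (a ^ 2 - 2 * b ^ 2) ^ 3 / ((a ^ 2 - b ^ 2) * (a ^ 2 + b ^ 2) ^ 3)).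
Definition y0 (a b : R) : R :=
  sqrt (b ^ 4 * (2 * a ^ 2 - b ^ 2) ^ 3 / ((a ^ 2 - b ^ 2) * (a ^ 2 + b ^ 2) ^ 3)).

(* The four open arcs into which the points (+-x0, +-y0) divide E. *)
Definition arc_top (a b : R) (A : pt) : Prop :=
  on_ellipse a b A /\ 0 < snd A /\ Rabs (fst A) < x0 a b.
Definition arc_bottom (a b : R) (A : pt) : Prop :=
  on_ellipse a b A /\ snd A < 0 /\ Rabs (fst A) < x0 a b.
Definition arc_right (a b : R) (A : pt) : Prop :=
  on_ellipse a b A /\ 0 < fst A /\ Rabs (snd A) < y0 a b.
Definition arc_left (a b : R) (A : pt) : Prop :=
  on_ellipse a b A /\ fst A < 0 /\ Rabs (snd A) < y0 a b.

Definition arcs (a b : R) : list (pt -> Prop) :=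
  arc_top a b :: arc_bottom a b :: arc_right a b :: arc_left a b :: nil.

Definition arc_count (a b : R) (arc : pt -> Prop) (k : nat) : Prop :=
  forall A : pt, arc A -> normal_count a b A k.

(* Main.v *)
Require Import Defs.
From Stdlib Require Import Reals Lra Lia Psatz List.
Open Scope R_scope.

Definition cub (A3 A2 A1 A0 x : R) := A3*x^3 + A2*x^2 + A1*x + A0.
Definition dgen (A3 A2 A1 A0 : R) :=
  18*A3*A2*A1*A0 - 4*A2^3*A0 + A2^2*A1^2 - 4*A3*A1^3 - 27*A3^2*A0^2.

Lemma cub_elim A3 A2 A1 A0 r r' : A3 <> 0 -> cub A3 A2 A1 A0 r = 0 ->
  cub A3 A2 A1 A0 r' = 0 -> r <> r' ->
  exists t, forall x, cub A3 A2 A1 A0 x = A3*(x-r)*(x-r')*(x-t).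
Proof.
  intros h3 h1 h2 hne.
  set (t := -A2/A3 - r - r').
  assert (e2 : A2 = -A3*(r+r'+t)) by (unfold t; field; auto).
  assert (B : (r-r')*(A3*(r^2+r*r'+r'^2)+A2*(r+r')+A1) = 0).
  { replace ((r-r')*(A3*(r^2+r*r'+r'^2)+A2*(r+r')+A1)) with (cub A3 A2 A1 A0 r - cub A3 A2 A1 A0 r') by (unfold cub; ring).
    rewrite h1, h2; ring. }
  assert (B' : A3*(r^2+r*r'+r'^2)+A2*(r+r')+A1 = 0).
  { destruct (Rmult_integral _ _ B) as [H|H]; [exfalso; apply hne; lra|exact H]. }
  assert (e1 : A1 = -A3*(r^2+r*r'+r'^2)-A2*(r+r')) by lra.
  assert (e0 : A0 = -(A3*r^3+A2*r^2+A1*r)) by (unfold cub in h1; lra).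
  exists t. intros x. unfold cub. rewrite e0, e1, e2. ring.
Qed.

Lemma cub_disc A3 A2 A1 A0 r r' : A3 <> 0 -> cub A3 A2 A1 A0 r = 0 ->
  cub A3 A2 A1 A0 r' = 0 -> r <> r' -> 0 <= dgen A3 A2 A1 A0.
Proof.
  intros h3 h1 h2 hne.
  set (t := -A2/A3 - r - r').
  assert (e2 : A2 = -A3*(r+r'+t)) by (unfold t; field; auto).
  assert (B : (r-r')*(A3*(r^2+r*r'+r'^2)+A2*(r+r')+A1) = 0).
  { replace ((r-r')*(A3*(r^2+r*r'+r'^2)+A2*(r+r')+A1)) with (cub A3 A2 A1 A0 r - cub A3 A2 A1 A0 r') by (unfold cub; ring).
    rewrite h1, h2; ring. }
  assert (B' : A3*(r^2+r*r'+r'^2)+A2*(r+r')+A1 = 0).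
  { destruct (Rmult_integral _ _ B) as [H|H]; [exfalso; apply hne; lra|exact H]. }
  assert (e1 : A1 = -A3*(r^2+r*r'+r'^2)-A2*(r+r')) by lra.
  assert (e0 : A0 = -(A3*r^3+A2*r^2+A1*r)) by (unfold cub in h1; lra).
  unfold dgen. rewrite e0, e1. rewrite e2.
  replace (_ - _) with ((A3^2*((r-r')*(r-t)*(r'-t)))^2) by ring.
  apply pow2_ge_0.
Qed.

Lemma cub_three A3 A2 A1 A0 r1 r2 r3 r : A3 <> 0 -> cub A3 A2 A1 A0 r1 = 0 ->
  cub A3 A2 A1 A0 r2 = 0 -> cub A3 A2 A1 A0 r3 = 0 -> r1 <> r2 -> r1 <> r3 -> r2 <> r3 ->
  cub A3 A2 A1 A0 r = 0 -> r = r1 \/ r = r2 \/ r = r3.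
Proof.
  intros h3 h1 h2 h3' n12 n13 n23 h.
  destruct (cub_elim _ _ _ _ _ _ h3 h1 h2 n12) as [t Ht].
  rewrite Ht in h3', h.
  assert (r3 = t).
  { destruct (Rmult_integral _ _ h3') as [H|H]; [|lra].
    destruct (Rmult_integral _ _ H) as [H'|H']; [|exfalso; apply n23; lra].
    destruct (Rmult_integral _ _ H') as [H''|H'']; [exfalso; auto|exfalso; apply n13; lra]. }
  subst t.
  destruct (Rmult_integral _ _ h) as [H|H]; [|lra].
  destruct (Rmult_integral _ _ H) as [H'|H']; [|lra].
  destruct (Rmult_integral _ _ H') as [H''|H'']; [exfalso; auto|lra].
Qed.

Definition G (a b p u : R) :=
  cub ((a^2-b^2)^2) (-(p*(a^2-b^2)*(a^2+b^2))) (-(a^4*(a^2-2*b^2))) (a^6*p) u.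

Lemma disc_G a b p : dgen ((a^2-b^2)^2) (-(p*(a^2-b^2)*(a^2+b^2))) (-(a^4*(a^2-2*b^2))) (a^6*p)
  = 4*(a^2-b^2)^2*a^6*((a^2-b^2)*(a^2+b^2)^3*p^2 - a^4*(a^2-2*b^2)^3)*(p^2-a^2).
Proof. unfold dgen. ring. Qed.

Lemma normal_iff a b u v p q : 0 < b -> b < a -> on_ellipse a b (u,v) ->
  (on_normal a b (u,v) (p,q) <-> a^2*p*v - b^2*q*u - (a^2-b^2)*u*v = 0).
Proof.
  intros hb hab he. unfold on_ellipse, on_normal in *; cbn [fst snd] in *.
  assert (ha : 0 < a) by lra.
  split.
  - intros [t [h1 h2]]. rewrite h1, h2. field. split; lra.
  - intros h. destruct (Req_dec u 0) as [hu|hu].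
    + subst u. assert (hv : v <> 0).
      { intro; subst v. assert (0 = 1) by (rewrite <- he; field; split; lra). lra. }
      assert (hp : a^2*p*v = 0) by lra.
      assert (p = 0).
      { destruct (Rmult_integral _ _ hp) as [H|H]; [|contradiction].
        destruct (Rmult_integral _ _ H) as [H'|H']; [|exact H'].
        exfalso; assert (a^2 > 0) by nra; lra. }
      exists ((q-v)*b^2/v). split. rewrite H. field. split; lra. field. split; lra.
    + exists ((p-u)*a^2/u). split. field. split; lra.
      apply (Rmult_eq_reg_l (u*b^2)). 2: { intro H; destruct (Rmult_integral _ _ H); [auto| nra]. }
      assert (eq : u*b^2*(v + (p-u)*a^2/u*(v/b^2)) = u*b^2*v + (p-u)*a^2*v) by (field; split; lra).
      rewrite eq. lra.
Qed.

Lemma nodup_map_inj {A B} (f : A -> B) (l : list A) :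
  (forall x y, f x = f y -> x = y) -> NoDup l -> NoDup (map f l).
Proof.
  intros hf hl; induction hl; simpl; constructor; auto.
  intro H'; apply in_map_iff in H'; destruct H' as [y [e i]].
  apply hf in e; subst; auto.
Qed.

Ltac nz := repeat match goal with |- _ * _ <> 0 => apply Rmult_integral_contrapositive; split end;
  first [assumption | intro; lra | intro; nra].

Ltac fside := repeat split; first [assumption | intro; lra | intro; nra | lra | match goal with hd : ?x <> 0 |- _ => intro hh; apply hd; lra end].

Lemma sq_pos x : x <> 0 -> 0 < x^2.
Proof. intros h. replace (x^2) with (Rsqr x) by (unfold Rsqr; ring). apply Rsqr_pos_lt; auto. Qed.

Lemma f_id a b p u : (u^2-a^2)*(a^2*p-(a^2-b^2)*u)^2 + b^4*(a^2-p^2)*u^2 = (u-p)*G a b p u.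
Proof. unfold G, cub. ring. Qed.

Lemma Gp a b p : G a b p p = 2*b^2*p*(a^4-(a^2-b^2)*p^2).
Proof. unfold G, cub. ring. Qed.

Lemma count_general a b p q L : 0 < b -> b < a -> on_ellipse a b (p,q) -> p <> 0 -> q <> 0 ->
  NoDup L -> (forall u, In u L <-> G a b p u = 0) -> normal_count a b (p,q) (S (length L)).
Proof.
  intros hb hab he hp hq hL hLc.
  assert (ha : 0 < a) by lra.
  assert (hq2 : a^2*q^2 = b^2*(a^2-p^2)).
  { unfold on_ellipse in he; cbn [fst snd] in he.
    replace (b^2*(a^2-p^2)) with (b^2*a^2*(1 - p^2/a^2)) by (field; lra).
    rewrite <- he. field. lra. }
  assert (hp2 : p^2 < a^2).
  { assert (0 < q^2) by (apply sq_pos; auto). assert (0 < b^2) by (apply pow_lt; lra).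
    assert (0 < a^2) by (apply pow_lt; lra).
    assert (0 < b^2*(a^2-p^2)) by (rewrite <- hq2; apply Rmult_lt_0_compat; auto).
    assert (0 < a^2-p^2). { apply (Rmult_lt_reg_l (b^2)); lra. } lra. }
  assert (hGp : G a b p p <> 0).
  { rewrite Gp. assert (0 < a^4-(a^2-b^2)*p^2).
    { assert (0 <= p^2) by apply pow2_ge_0. assert (0< b^2) by nra. nra. }
    assert (0 < b^2) by (apply pow_lt; lra).
    nz. }
  assert (hD : forall u, G a b p u = 0 -> a^2*p-(a^2-b^2)*u <> 0).
  { intros u hu hd. pose proof (f_id a b p u) as e. rewrite hu, hd in e.
    assert (u = 0).
    { assert (b^4*(a^2-p^2)*u^2 = 0) by (rewrite Rmult_0_r in e; lra).
      assert (0 < b^4*(a^2-p^2)) by (assert (0<b^4) by (apply pow_lt; lra); nra).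
      assert (u^2 = 0) by (apply (Rmult_eq_reg_l (b^4*(a^2-p^2))); lra).
      nra. }
    subst u. assert (a^2*p = 0) by lra. assert (0 < a^2) by nra. nra. }
  set (F := fun u => (u, b^2*q*u/(a^2*p-(a^2-b^2)*u))).
  exists ((p,q) :: map F L). split; [|split].
  - constructor.
    + intro H. apply in_map_iff in H. destruct H as [u [e i]].
      unfold F in e. injection e as e1 e2. subst u. apply hLc in i. auto.
    + apply nodup_map_inj; auto. intros x y e. unfold F in e. injection e; auto.
  - simpl. rewrite length_map. reflexivity.
  - intros [u v]. split.
    + intros [e|i].
      * injection e as e1 e2; subst. split; auto.
        apply normal_iff; auto. ring.
      * apply in_map_iff in i. destruct i as [w [e i]]. unfold F in e. injection e as e1 e2. subst u v.
        apply hLc in i. pose proof (hD w i) as hd. pose proof (f_id a b p w) as fe. rewrite i, Rmult_0_r in fe.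
        assert (hel : on_ellipse a b (w, b ^ 2 * q * w / (a ^ 2 * p - (a ^ 2 - b ^ 2) * w))).
        { unfold on_ellipse; cbn [fst snd].
          apply (Rmult_eq_reg_l (a^2*(a^2*p-(a^2-b^2)*w)^2)).
          2: { apply Rmult_integral_contrapositive; split. nra. apply pow_nonzero; auto. }
          transitivity (w^2*(a ^ 2 * p - (a ^ 2 - b ^ 2) * w)^2 + b^2*(a^2*q^2)*w^2).
          field. split; [auto|split; lra].
          rewrite hq2. lra. }
        split; auto. apply normal_iff; auto. field. intro hh; apply hd; lra.
    + intros [hel hn]. apply normal_iff in hn; auto.
      assert (hd : a^2*p-(a^2-b^2)*u <> 0).
      { intro hd. assert (b^2*q*u = 0).
        { replace (b^2*q*u) with (v*(a^2*p-(a^2-b^2)*u) - (a ^ 2 * p * v - b ^ 2 * q * u - (a ^ 2 - b ^ 2) * u * v)) by ring.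
          rewrite hd, hn. ring. }
        assert (u = 0).
        { destruct (Rmult_integral _ _ H) as [H1|H1]; auto.
          destruct (Rmult_integral _ _ H1); [nra|contradiction]. }
        subst u. assert (a^2*p = 0) by lra. nra. }
      assert (hv : v = b^2*q*u/(a^2*p-(a^2-b^2)*u)).
      { apply (Rmult_eq_reg_l (a^2*p-(a^2-b^2)*u)); auto. field_simplify; auto. lra. }
      assert (hf : (u-p)*G a b p u = 0).
      { rewrite <- f_id. unfold on_ellipse in hel; cbn [fst snd] in hel.
        transitivity (a^2*(a ^ 2 * p - (a ^ 2 - b ^ 2) * u) ^ 2 * (u ^ 2 / a ^ 2 + v ^ 2 / b ^ 2 - 1)).
        2: { rewrite hel. ring. }
        rewrite hv. replace (b^4*(a^2-p^2)) with (b^2*(a^2*q^2)) by (rewrite hq2; ring).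
        field. fside. }
      destruct (Rmult_integral _ _ hf) as [h1|h1].
      * left. assert (u = p) by lra. subst u. f_equal. rewrite hv. field. fside.
      * right. apply in_map_iff. exists u. split. unfold F. rewrite <- hv. reflexivity.
        apply hLc; auto.
Qed.

Lemma G_cont a b p : continuity (fun u => G a b p u).
Proof. unfold G, cub. reg. Qed.

Lemma G_a a b p : G a b p a = a^2*b^4*(a+p).
Proof. unfold G, cub. ring. Qed.
Lemma G_ma a b p : G a b p (-a) = a^2*b^4*(p-a).
Proof. unfold G, cub. ring. Qed.
Lemma G_0 a b p : G a b p 0 = a^6*p.
Proof. unfold G, cub. ring. Qed.
Lemma G_odd a b p u : G a b (-p) (-u) = - G a b p u.
Proof. unfold G, cub. ring. Qed.

Lemma ivt_strict f x y : continuity f -> x < y -> f x < 0 -> 0 < f y ->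
  exists z, x < z < y /\ f z = 0.
Proof.
  intros hc hxy hx hy. destruct (IVT f x y hc hxy hx hy) as [z [[h1 h2] h3]].
  exists z. split; [split|auto].
  - destruct h1 as [h|h]; auto. subst; lra.
  - destruct h2 as [h|h]; auto. subst; lra.
Qed.

Lemma one_root a b p : 0 < b -> b < a -> p^2 < a^2 ->
  0 < (a^2-b^2)*(a^2+b^2)^3*p^2 - a^4*(a^2-2*b^2)^3 ->
  exists r, NoDup (r :: nil) /\ forall u, In u (r :: nil) <-> G a b p u = 0.
Proof.
  intros hb hab hp hX.
  assert (ha : 0 < a) by lra.
  assert (hk0 : 0 < a^2-b^2) by nra.
  assert (hpa : -a < p < a) by (split; nra).
  assert (hb4 : 0 < b^4) by (apply pow_lt; lra).
  assert (ha2 : 0 < a^2) by (apply pow_lt; lra).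
  destruct (ivt_strict (fun u => G a b p u) (-a) a (G_cont a b p)) as [r [hr1 hr2]].
  lra. rewrite G_ma. assert (0 < a^2*b^4) by nra. nra.
  rewrite G_a. assert (0 < a^2*b^4) by nra. nra.
  exists r. split. constructor. auto. constructor.
  intros u. split.
  - intros [e|[]]. subst; auto.
  - intros hu. left. destruct (Req_dec r u) as [e|ne]; auto. exfalso.
    assert (hk : (a^2-b^2)^2 <> 0). { apply pow_nonzero. lra. }
    pose proof (cub_disc _ _ _ _ r u hk hr2 hu ne) as hd.
    rewrite disc_G in hd.
    assert (0 < (a^2-b^2)^2) by (apply pow_lt; lra).
    assert (0 < a^6) by (apply pow_lt; lra).
    assert (0 < 4*(a^2-b^2)^2*a^6*((a^2-b^2)*(a^2+b^2)^3*p^2 - a^4*(a^2-2*b^2)^3)) by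
      (repeat apply Rmult_lt_0_compat; lra).
    nra.
Qed.

Lemma G_ac a b c : 0 < a -> 0 < a^2-b^2 ->
  G a b ((a^2-b^2)*c^3/a) (a*c) =
  - a*c*(((a^2-b^2)*c^2 - a^2)*((a^2-b^2)*(a^2+b^2)*c^2 - a^2*(a^2-2*b^2))).
Proof. intros. unfold G, cub. field. fside. Qed.

Lemma cube_root x : 0 < x -> exists c, 0 < c /\ c^3 = x.
Proof.
  intros hx.
  destruct (ivt_strict (fun c => c^3 - x) 0 (1+x)) as [c [hc e]].
  reg. lra. simpl. lra.
  assert (1 <= (1+x)^2) by nra. simpl in *. nra.
  exists c. split. lra. lra.
Qed.

Lemma three_roots_pos a b p : 0 < b -> b < a -> 0 < a^2-2*b^2 -> 0 < p ->
  (a^2-b^2)*(a^2+b^2)^3*p^2 < a^4*(a^2-2*b^2)^3 ->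
  exists r1 r2 r3, r1 < r2 < r3 /\ G a b p r1 = 0 /\ G a b p r2 = 0 /\ G a b p r3 = 0.
Proof.
  intros hb hab hm hp hX.
  assert (ha : 0 < a) by lra.
  assert (hk : 0 < a^2-b^2) by nra.
  assert (hs : 0 < a^2+b^2) by nra.
  assert (hb4 : 0 < b^4) by (apply pow_lt; lra).
  assert (ha2 : 0 < a^2) by (apply pow_lt; lra).
  destruct (cube_root (a*p/(a^2-b^2))) as [c [hc hc3]].
  { apply Rdiv_lt_0_compat; nra. }
  assert (ep : p = (a^2-b^2)*c^3/a). { rewrite hc3. field. fside. }
  set (k := a^2-b^2) in *. set (s := a^2+b^2) in *. set (m := a^2-2*b^2) in *.
  set (z := c^2).
  assert (hz : 0 < z) by (unfold z; apply pow_lt; lra).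
  assert (hkz : k*s*z < a^2*m).
  { destruct (Rlt_or_le (k*s*z) (a^2*m)) as [h|h]; auto. exfalso.
    assert (h3 : (a^2*m)^3 <= (k*s*z)^3) by (apply pow_incr; split; nra).
    rewrite ep in hX.
    assert (e1 : k * s ^ 3 * (k * c ^ 3 / a) ^ 2 = (k*s*z)^3 / a^2) by (unfold z; field; fside).
    rewrite e1 in hX.
    assert (e2 : a ^ 4 * m ^ 3 = (a^2*m)^3/a^2) by (field; fside).
    rewrite e2 in hX.
    assert (h4 : (k*s*z)^3 < (a^2*m)^3).
    { apply (Rmult_lt_reg_r (/a^2)). apply Rinv_0_lt_compat; lra. exact hX. }
    lra. }
  assert (hms : a^2*m < k*s).
  { unfold m, k, s. assert (0 < b^2*(2*a^2-b^2)) by (apply Rmult_lt_0_compat; nra). nra. }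
  clear hX.
  assert (hks : 0 < k*s) by (apply Rmult_lt_0_compat; lra).
  assert (hc1 : c < 1).
  { destruct (Rlt_or_le c 1) as [h|h]; auto. exfalso.
    assert (1 <= z) by (unfold z; replace 1 with (1^2) by ring; apply pow_incr; lra).
    assert (k*s*1 <= k*s*z) by (apply Rmult_le_compat_l; lra). lra. }
  assert (hGac : G a b p (a*c) < 0).
  { rewrite ep. unfold k. rewrite G_ac by first [lra | exact hk]. fold k. fold s m.
    replace (c^2) with z by reflexivity.
    assert (kz1 : k*z - a^2 < 0).
    { assert (hm2 : m < s) by (unfold m, s; assert (0<b^2) by (apply pow_lt; lra); lra).
      assert (k*z*s < a^2 * s).
      { apply (Rlt_trans _ (a^2*m)). lra. apply Rmult_lt_compat_l; lra. }
      apply Rmult_lt_reg_r in H; lra. }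
    assert (0 < a*c) by (apply Rmult_lt_0_compat; lra).
    assert (0 < (k*z - a^2)*(k*s*z - a^2*m)).
    { replace ((k*z - a^2)*(k*s*z - a^2*m)) with ((a^2 - k*z)*(a^2*m - k*s*z)) by ring.
      apply Rmult_lt_0_compat; lra. }
    assert (0 < a*c*((k*z - a^2)*(k*s*z - a^2*m))) by (apply Rmult_lt_0_compat; lra).
    lra. }
  assert (hac : 0 < a*c) by (apply Rmult_lt_0_compat; lra).
  assert (hac1 : a*c < a) by (rewrite <- (Rmult_1_r a) at 2; apply Rmult_lt_compat_l; lra).
  assert (g0 : 0 < G a b p 0) by (rewrite G_0; apply Rmult_lt_0_compat; [apply pow_lt|]; lra).
  assert (gma : G a b p (-a) < 0).
  { rewrite G_ma. assert (0 < a^2*b^4) by (apply Rmult_lt_0_compat; lra).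
    assert (p < a).
    { rewrite ep. apply (Rmult_lt_reg_r a); [lra|].
      replace (k*c^3/a*a) with (k*c^3) by (field; fside).
      assert (c^3 < 1) by (clear - hc hc1; simpl; nra).


      assert (k*c^3 < k*1) by (apply Rmult_lt_compat_l; lra).
      unfold k in *. nra. }
    assert (0 < a^2*b^4*(a-p)) by (apply Rmult_lt_0_compat; lra). lra. }
  assert (gac : 0 < G a b p a) by (rewrite G_a; apply Rmult_lt_0_compat; [apply Rmult_lt_0_compat|]; lra).
  destruct (ivt_strict (fun u => G a b p u) (-a) 0 (G_cont a b p)) as [r1 [hr1 e1]]; try lra.
  destruct (ivt_strict (fun u => - G a b p u) 0 (a*c)) as [r2 [hr2 e2]]; try lra.
  { apply continuity_opp, G_cont. }
  destruct (ivt_strict (fun u => G a b p u) (a*c) a (G_cont a b p)) as [r3 [hr3 e3]]; try lra.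
  exists r1, r2, r3. split. lra. split; [|split]; auto. lra.
Qed.

Lemma G_odd' a b p u : G a b p (-u) = - G a b (-p) u.
Proof. unfold G, cub. ring. Qed.

Lemma list3 a b p r1 r2 r3 : 0 < b -> b < a -> r1 < r2 < r3 ->
  G a b p r1 = 0 -> G a b p r2 = 0 -> G a b p r3 = 0 ->
  exists L, NoDup L /\ length L = 3%nat /\ forall u, In u L <-> G a b p u = 0.
Proof.
  intros hb hab hr e1 e2 e3. exists (r1 :: r2 :: r3 :: nil).
  split; [|split; [reflexivity|]].
  - constructor. simpl; intros [h|[h|[]]]; lra.
    constructor. simpl; intros [h|[]]; lra.
    constructor. simpl; auto. constructor.
  - intros u; split.
    + simpl. intros [h|[h|[h|[]]]]; subst; auto.
    + intros hu. assert (hk : (a^2-b^2)^2 <> 0) by (apply pow_nonzero; nra).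
      destruct (cub_three _ _ _ _ r1 r2 r3 u hk e1 e2 e3) as [h|[h|h]]; try lra; auto;
      subst; simpl; auto.
Qed.

Lemma three_roots a b p : 0 < b -> b < a -> 0 < a^2-2*b^2 -> p <> 0 ->
  (a^2-b^2)*(a^2+b^2)^3*p^2 < a^4*(a^2-2*b^2)^3 ->
  exists L, NoDup L /\ length L = 3%nat /\ forall u, In u L <-> G a b p u = 0.
Proof.
  intros hb hab hm hp hX.
  destruct (Rlt_or_le 0 p) as [h|h].
  - destruct (three_roots_pos a b p hb hab hm h hX) as [r1 [r2 [r3 [hr [e1 [e2 e3]]]]]].
    exact (list3 a b p r1 r2 r3 hb hab hr e1 e2 e3).
  - assert (h' : 0 < -p) by (destruct h; [lra|subst; lra]).
    assert (hX' : (a^2-b^2)*(a^2+b^2)^3*(-p)^2 < a^4*(a^2-2*b^2)^3).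
    { replace ((-p)^2) with (p^2) by ring. exact hX. }
    destruct (three_roots_pos a b (-p) hb hab hm h' hX') as [r1 [r2 [r3 [hr [e1 [e2 e3]]]]]].
    apply (list3 a b p (-r3) (-r2) (-r1) hb hab); [lra| | |];
      rewrite G_odd'; [rewrite e3|rewrite e2|rewrite e1]; ring.
Qed.

Lemma ell_poly a b u v : 0 < b -> b < a ->
  (on_ellipse a b (u,v) <-> b^2*u^2 + a^2*v^2 = a^2*b^2).
Proof.
  intros hb hab. unfold on_ellipse; cbn [fst snd].
  assert (0 < a^2) by (apply pow_lt; lra). assert (0 < b^2) by (apply pow_lt; lra).
  split; intro h.
  - replace (b^2*u^2 + a^2*v^2) with (a^2*b^2*(u^2/a^2+v^2/b^2)) by (field; fside).
    rewrite h. ring.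
  - apply (Rmult_eq_reg_l (a^2*b^2)). 2: nz.
    rewrite <- h at 2. field. fside.
Qed.

Lemma sq_eq u w : u^2 = w^2 -> u = w \/ u = -w.
Proof.
  intros h. assert ((u-w)*(u+w) = 0) by (ring_simplify; lra).
  destruct (Rmult_integral _ _ H); [left|right]; lra.
Qed.

Lemma special_side a b p : 0 < b -> b < a -> p^2 = a^2 -> normal_count a b (p,0) 2.
Proof.
  intros hb hab hp.
  assert (ha : 0 < a) by lra.
  assert (hk : 0 < a^2-b^2) by nra.
  assert (ha2 : 0 < a^2) by (apply pow_lt; lra).
  assert (hb2 : 0 < b^2) by (apply pow_lt; lra).
  exists ((a,0)::(-a,0)::nil). split; [|split; [reflexivity|]].
  - constructor. simpl. intros [h|[]]. injection h; lra.
    constructor. simpl; auto. constructor.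
  - intros [u v]. split.
    + simpl. intros [h|[h|[]]]; injection h as h1 h2; subst u v;
      (split; [apply ell_poly; auto; ring|apply normal_iff; [auto|auto| apply ell_poly; auto; ring|]]);
      ring.
    + intros [he hn]. apply normal_iff in hn; auto. apply ell_poly in he; auto.
      assert (v*(a^2*p - (a^2-b^2)*u) = 0) by lra.
      destruct (Rmult_integral _ _ H) as [h|h].
      * subst v. assert (u^2 = a^2) by (apply (Rmult_eq_reg_l (b^2)); nra).
        destruct (sq_eq _ _ H0); subst u; simpl; auto.
      * exfalso. assert (hu : (a^2-b^2)*u = a^2*p) by lra.
        assert (((a^2-b^2)*u)^2 = a^4*a^2) by (rewrite hu; replace (a^4) with (a^2*a^2) by ring; rewrite <- hp; ring).
        assert (u^2 <= a^2) by (clear - he ha2 hb2; nra).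
        assert (((a^2-b^2)*u)^2 <= (a^2-b^2)^2*a^2).
        { rewrite Rpow_mult_distr. apply Rmult_le_compat_l. apply pow2_ge_0. auto. }
        assert ((a^2-b^2)^2 < a^4) by (clear - hk hb2; nra).
        clear - H0 H2 H3 ha2. nra.
Qed.

Lemma top_equiv a b q u v : 0 < b -> b < a -> q^2 = b^2 ->
  (on_ellipse a b (u,v) /\ on_normal a b (u,v) (0,q)) <->
  ((u = 0 /\ (v = b \/ v = -b)) \/
   (u <> 0 /\ v = -(b^2*q)/(a^2-b^2) /\ b^2*u^2 = a^2*b^2 - a^2*(b^4*b^2/(a^2-b^2)^2))).
Proof.
  intros hb hab hq.
  assert (ha : 0 < a) by lra.
  assert (hk : 0 < a^2-b^2) by nra.
  assert (ha2 : 0 < a^2) by (apply pow_lt; lra).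
  assert (hb2 : 0 < b^2) by (apply pow_lt; lra).
  split.
  - intros [he hn]. apply normal_iff in hn; auto. apply ell_poly in he; auto.
    destruct (Req_dec u 0) as [hu|hu].
    + left. subst u. split; auto. apply sq_eq. apply (Rmult_eq_reg_l (a^2)); nra.
    + right. assert (u*(b^2*q + (a^2-b^2)*v) = 0) by lra.
      destruct (Rmult_integral _ _ H) as [h|h]; [contradiction|].
      assert (hv : v = -(b^2*q)/(a^2-b^2)).
      { apply (Rmult_eq_reg_l (a^2-b^2)); [|intro; lra].
        replace ((a^2-b^2)*(-(b^2*q)/(a^2-b^2))) with (-(b^2*q)) by (field; fside). lra. }
      split; auto; split; auto.
      replace (b^4*b^2/(a^2-b^2)^2) with (v^2). lra.
      rewrite hv. replace (b^4*b^2) with (b^4*q^2) by (rewrite hq; ring). field. fside.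
  - intros [[hu [hv|hv]]|[hu [hv hw]]]; subst.
    + split. apply ell_poly; auto; ring. apply normal_iff; auto. apply ell_poly; auto; ring. ring.
    + split. apply ell_poly; auto; ring. apply normal_iff; auto. apply ell_poly; auto; ring. ring.
    + assert (he : on_ellipse a b (u, - (b ^ 2 * q) / (a ^ 2 - b ^ 2))).
      { apply ell_poly; auto. rewrite hw.
        replace (b^4*b^2) with (b^4*q^2) by (rewrite hq; ring). field. fside. }
      split; auto. apply normal_iff; auto. field. fside.
Qed.

Lemma special_top2 a b q : 0 < b -> b < a -> q^2 = b^2 -> a^2 <= 2*b^2 -> normal_count a b (0,q) 2.
Proof.
  intros hb hab hq hm.
  assert (ha : 0 < a) by lra.
  assert (hk : 0 < a^2-b^2) by nra.
  assert (ha2 : 0 < a^2) by (apply pow_lt; lra).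
  assert (hb2 : 0 < b^2) by (apply pow_lt; lra).
  exists ((0,b)::(0,-b)::nil). split; [|split; [reflexivity|]].
  - constructor. simpl. intros [h|[]]. injection h; lra.
    constructor. simpl; auto. constructor.
  - intros [u v]. rewrite (top_equiv a b q u v hb hab hq). split.
    + simpl. intros [h|[h|[]]]; injection h as h1 h2; subst; left; split; auto.
    + intros [[hu [hv|hv]]|[hu [hv hw]]]; subst; simpl; auto.
      exfalso. assert (0 < u^2) by (apply sq_pos; auto).
      assert (0 < b^2*u^2) by (apply Rmult_lt_0_compat; auto).
      assert (hkb : (a^2-b^2)^2 <= b^4).
      { replace (b^4) with ((b^2)^2) by ring. apply pow_incr. lra. }
      assert (b^4*b^2/(a^2-b^2)^2 >= b^2).
      { apply Rle_ge. apply (Rmult_le_reg_r ((a^2-b^2)^2)). apply pow_lt; lra.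
        replace (b^4*b^2/(a^2-b^2)^2*(a^2-b^2)^2) with (b^4*b^2) by (field; fside).
        replace (b^4*b^2) with (b^2*b^4) by ring. apply Rmult_le_compat_l; lra. }
      assert (a^2*(b^4*b^2/(a^2-b^2)^2) >= a^2*b^2) by (apply Rle_ge, Rmult_le_compat_l; lra).
      lra.
Qed.

Lemma special_top4 a b q : 0 < b -> b < a -> q^2 = b^2 -> a^2 > 2*b^2 -> normal_count a b (0,q) 4.
Proof.
  intros hb hab hq hm.
  assert (ha : 0 < a) by lra.
  assert (hk : 0 < a^2-b^2) by nra.
  assert (ha2 : 0 < a^2) by (apply pow_lt; lra).
  assert (hb2 : 0 < b^2) by (apply pow_lt; lra).
  set (W := (a^2*b^2 - a^2*(b^4*b^2/(a^2-b^2)^2))/b^2).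
  assert (hW : 0 < W).
  { unfold W. apply Rdiv_lt_0_compat; auto.
    assert (hkb : b^4 < (a^2-b^2)^2).
    { assert (b^2 < a^2-b^2) by lra. replace (b^4) with (b^2*b^2) by ring.
      replace ((a^2-b^2)^2) with ((a^2-b^2)*(a^2-b^2)) by ring.
      apply Rmult_le_0_lt_compat; lra. }
    assert (b^4*b^2/(a^2-b^2)^2 < b^2).
    { apply (Rmult_lt_reg_r ((a^2-b^2)^2)). apply pow_lt; lra.
      replace (b^4*b^2/(a^2-b^2)^2*(a^2-b^2)^2) with (b^4*b^2) by (field; fside).
      replace (b^4*b^2) with (b^2*b^4) by ring. apply Rmult_lt_compat_l; lra. }
    assert (a^2*(b^4*b^2/(a^2-b^2)^2) < a^2*b^2) by (apply Rmult_lt_compat_l; lra).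
    lra. }
  set (w := sqrt W). set (v1 := -(b^2*q)/(a^2-b^2)).
  assert (hw : w^2 = W) by (unfold w; rewrite <- Rsqr_pow2; apply Rsqr_sqrt; lra).
  assert (hw0 : 0 < w) by (unfold w; apply sqrt_lt_R0; auto).
  exists ((0,b)::(0,-b)::(w,v1)::(-w,v1)::nil). split; [|split; [reflexivity|]].
  - constructor. simpl. intros [h|[h|[h|[]]]]; injection h; lra.
    constructor. simpl. intros [h|[h|[]]]; injection h; lra.
    constructor. simpl. intros [h|[]]; injection h; lra.
    constructor. simpl; auto. constructor.
  - intros [u v]. rewrite (top_equiv a b q u v hb hab hq). split.
    + intros [h|[h|[h|[h|[]]]]]; injection h as h1 h2; subst.
      * left; split; auto.
      * left; split; auto.
      * right. split. lra. split. reflexivity. rewrite hw. unfold W. field. fside.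
      * right. split. lra. split. reflexivity. replace ((-w)^2) with (w^2) by ring.
        rewrite hw. unfold W. field. fside.
    + intros [[hu [hv|hv]]|[hu [hv hw']]]; subst; simpl; auto.
      right; right. 
      assert (u^2 = w^2).
      { rewrite hw. unfold W. apply (Rmult_eq_reg_l (b^2)); [|intro; lra]. rewrite hw'. field. fside. }
      destruct (sq_eq _ _ H) as [e|e]; subst; auto.
Qed.

Lemma aux_ineq A m k s : 0 < m -> m < k -> m < s -> 0 < A -> A < s -> A*m^3 < k*s^3.
Proof.
  intros. assert (m*m < s*s) by (apply Rmult_le_0_lt_compat; lra).
  assert (m*m*m < (s*s)*k) by (apply Rmult_le_0_lt_compat; nra).
  assert (A*(m*m*m) < s*((s*s)*k)) by (apply Rmult_le_0_lt_compat; nra).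
  replace (A*m^3) with (A*(m*m*m)) by ring. replace (k*s^3) with (s*((s*s)*k)) by ring. lra.
Qed.

Lemma abs_sqrt p X : Rabs p < sqrt X -> p^2 < X.
Proof.
  intros h. destruct (Rle_or_lt X 0) as [hx|hx].
  - rewrite sqrt_neg_0 in h by auto. pose proof (Rabs_pos p). lra.
  - rewrite <- pow2_abs. rewrite <- (pow2_sqrt X) by lra.
    pose proof (Rabs_pos p). clear - h H. nra.
Qed.

Lemma ell_q2 a b p q : 0 < b -> b < a -> on_ellipse a b (p,q) -> a^2*q^2 = b^2*(a^2-p^2).
Proof. intros hb hab he. apply ell_poly in he; auto. lra. Qed.

Lemma count4 a b p q : 0 < b -> b < a -> a^2 > 2*b^2 -> on_ellipse a b (p,q) ->
  (a^2-b^2)*(a^2+b^2)^3*p^2 < a^4*(a^2-2*b^2)^3 -> normal_count a b (p,q) 4.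
Proof.
  intros hb hab hm he hX.
  assert (ha : 0 < a) by lra.
  assert (hk : 0 < a^2-b^2) by nra.
  assert (ha2 : 0 < a^2) by (apply pow_lt; lra).
  assert (hb2 : 0 < b^2) by (apply pow_lt; lra).
  pose proof (ell_q2 a b p q hb hab he) as hq.
  destruct (Req_dec p 0) as [hp|hp].
  - subst p. apply special_top4; auto. apply (Rmult_eq_reg_l (a^2)); [|intro; lra].
    rewrite hq. ring.
  - assert (hq0 : q <> 0).
    { intro e. subst q. assert (hp2 : p^2 = a^2) by (clear - hq hb2; nra).
      rewrite hp2 in hX.
      assert (hm0 : 0 < a^2-2*b^2) by lra.
      pose proof (aux_ineq (a^2) (a^2-2*b^2) (a^2-b^2) (a^2+b^2) hm0 ltac:(lra) ltac:(lra) ha2 ltac:(lra)).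
      assert (a^2*((a^2-b^2)*(a^2+b^2)^3) < a^2*(a^2*(a^2-2*b^2)^3)).
      { replace (a^2*((a^2-b^2)*(a^2+b^2)^3)) with ((a ^ 2 - b ^ 2) * (a ^ 2 + b ^ 2) ^ 3 * a ^ 2) by ring.
        replace (a^2*(a^2*(a^2-2*b^2)^3)) with (a ^ 4 * (a ^ 2 - 2 * b ^ 2) ^ 3) by ring. exact hX. }
      apply Rmult_lt_reg_l in H0; lra. }
    destruct (three_roots a b p hb hab ltac:(lra) hp hX) as [L [hL [hlen hc]]].
    rewrite <- hlen. apply count_general; auto.
Qed.

Lemma count2 a b p q : 0 < b -> b < a -> on_ellipse a b (p,q) -> p <> 0 ->
  a^4*(a^2-2*b^2)^3 < (a^2-b^2)*(a^2+b^2)^3*p^2 -> normal_count a b (p,q) 2.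
Proof.
  intros hb hab he hp hX.
  assert (ha : 0 < a) by lra.
  assert (ha2 : 0 < a^2) by (apply pow_lt; lra).
  assert (hb2 : 0 < b^2) by (apply pow_lt; lra).
  pose proof (ell_q2 a b p q hb hab he) as hq.
  destruct (Req_dec q 0) as [hq0|hq0].
  - subst q. apply special_side; auto. clear - hq hb2; nra.
  - assert (hp2 : p^2 < a^2).
    { assert (0 < q^2) by (apply sq_pos; auto). clear - hq hb2 H ha2. nra. }
    destruct (one_root a b p hb hab hp2 ltac:(lra)) as [r [hL hc]].
    change 2%nat with (S (length (r::nil))). apply count_general; auto.
Qed.

Lemma X_id a b : 0 < b -> b < a ->
  a^4*(a^2-2*b^2)^3/((a^2-b^2)*(a^2+b^2)^3)/a^2 + b^4*(2*a^2-b^2)^3/((a^2-b^2)*(a^2+b^2)^3)/b^2 = 1.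
Proof.
  intros hb hab. assert (0 < a^2-b^2) by nra. assert (0 < a^2+b^2) by nra.
  assert (0 < (a^2+b^2)^3) by (apply pow_lt; lra).
  field. repeat split; try (intro; lra); try (intro; nra); apply pow_nonzero; lra.
Qed.

Theorem theorem1 (a b : R) (hb : 0 < b) (hab : b < a) :
  (a ^ 2 > 2 * b ^ 2 ->
     (on_ellipse a b (x0 a b, y0 a b) /\ on_ellipse a b (- x0 a b, y0 a b) /\
      on_ellipse a b (x0 a b, - y0 a b) /\ on_ellipse a b (- x0 a b, - y0 a b)) /\
     (forall arc, In arc (arcs a b) -> arc_count a b arc 4 \/ arc_count a b arc 2) /\
     (exists arc, In arc (arcs a b) /\ arc_count a b arc 4) /\
     (exists arc, In arc (arcs a b) /\ arc_count a b arc 2)) /\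
  (a ^ 2 <= 2 * b ^ 2 ->
     forall A : pt, on_ellipse a b A -> normal_count a b A 2).
Proof.
  assert (ha : 0 < a) by lra.
  assert (hk : 0 < a^2-b^2) by nra.
  assert (hs : 0 < a^2+b^2) by nra.
  assert (ha2 : 0 < a^2) by (apply pow_lt; lra).
  assert (hb2 : 0 < b^2) by (apply pow_lt; lra).
  assert (hks : 0 < (a^2-b^2)*(a^2+b^2)^3) by (apply Rmult_lt_0_compat; [lra|apply pow_lt; lra]).
  set (X := a^4*(a^2-2*b^2)^3/((a^2-b^2)*(a^2+b^2)^3)).
  set (Y := b^4*(2*a^2-b^2)^3/((a^2-b^2)*(a^2+b^2)^3)).
  assert (hXY : X/a^2 + Y/b^2 = 1) by (apply X_id; auto).
  assert (hY : 0 < Y).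
  { unfold Y. apply Rdiv_lt_0_compat; auto. apply Rmult_lt_0_compat. apply pow_lt; lra.
    apply pow_lt. lra. }
  split.
  - intros hm.
    assert (hm0 : 0 < a^2-2*b^2) by lra.
    assert (hX : 0 < X).
    { unfold X. apply Rdiv_lt_0_compat; auto. apply Rmult_lt_0_compat; apply pow_lt; lra. }
    assert (ex0 : x0 a b ^ 2 = X) by (apply pow2_sqrt; lra).
    assert (ey0 : y0 a b ^ 2 = Y) by (apply pow2_sqrt; lra).
    assert (top : forall p q, on_ellipse a b (p,q) -> Rabs p < x0 a b -> normal_count a b (p,q) 4).
    { intros p q he hp. apply count4; auto.
      apply abs_sqrt in hp. fold X in hp.
      apply (Rmult_lt_compat_l ((a^2-b^2)*(a^2+b^2)^3)) in hp; auto.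
      unfold X in hp. replace ((a ^ 2 - b ^ 2) * (a ^ 2 + b ^ 2) ^ 3 *
       (a ^ 4 * (a ^ 2 - 2 * b ^ 2) ^ 3 / ((a ^ 2 - b ^ 2) * (a ^ 2 + b ^ 2) ^ 3)))
       with (a ^ 4 * (a ^ 2 - 2 * b ^ 2) ^ 3) in hp by (field; lra). exact hp. }
    assert (side : forall p q, on_ellipse a b (p,q) -> p <> 0 -> Rabs q < y0 a b -> normal_count a b (p,q) 2).
    { intros p q he hp hq. apply count2; auto.
      apply abs_sqrt in hq. fold Y in hq.
      pose proof (ell_q2 a b p q hb hab he) as hq2.
      assert (hpX : X < p^2).
      { assert (X = a^2*(1 - Y/b^2)) by (rewrite <- hXY; field; lra).
        assert (p^2 = a^2*(1 - q^2/b^2)) by (field_simplify; [|lra]; apply (Rmult_eq_reg_l (b^2)); [|lra]; field_simplify; [|lra]; lra).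
        assert (Y/b^2 > q^2/b^2) by (apply Rmult_lt_compat_r; [apply Rinv_0_lt_compat|]; lra).
        assert (a^2*(Y/b^2) > a^2*(q^2/b^2)) by (apply Rmult_lt_compat_l; lra).
        lra. }
      apply (Rmult_lt_compat_l ((a^2-b^2)*(a^2+b^2)^3)) in hpX; auto.
      unfold X in hpX. replace ((a ^ 2 - b ^ 2) * (a ^ 2 + b ^ 2) ^ 3 *
       (a ^ 4 * (a ^ 2 - 2 * b ^ 2) ^ 3 / ((a ^ 2 - b ^ 2) * (a ^ 2 + b ^ 2) ^ 3)))
       with (a ^ 4 * (a ^ 2 - 2 * b ^ 2) ^ 3) in hpX by (field; lra). exact hpX. }
    split; [|split; [|split]].
    + unfold on_ellipse; cbn [fst snd].
      replace ((- x0 a b)^2) with (x0 a b ^2) by ring.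
      replace ((- y0 a b)^2) with (y0 a b ^2) by ring.
      rewrite ex0, ey0. auto.
    + intros arc hin. simpl in hin.
      destruct hin as [<-|[<-|[<-|[<-|[]]]]].
      * left. intros [p q] [he [_ hp]]. apply top; auto.
      * left. intros [p q] [he [_ hp]]. apply top; auto.
      * right. intros [p q] [he [hp hq]]. apply side; auto. cbn in hp. lra.
      * right. intros [p q] [he [hp hq]]. apply side; auto. cbn in hp. lra.
    + exists (arc_top a b). split. simpl; auto.
      intros [p q] [he [_ hp]]. apply top; auto.
    + exists (arc_right a b). split. simpl; auto.
      intros [p q] [he [hp hq]]. apply side; auto. cbn in hp. lra.
  - intros hm [p q] he.
    destruct (Req_dec p 0) as [hp|hp].
    + subst p. pose proof (ell_q2 a b 0 q hb hab he) as hq.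
      apply special_top2; auto. apply (Rmult_eq_reg_l (a^2)); [|intro; lra]. rewrite hq. ring.
    + apply count2; auto.
      assert (0 < p^2) by (apply sq_pos; auto).
      assert (0 < (a^2-b^2)*(a^2+b^2)^3*p^2) by (apply Rmult_lt_0_compat; auto).
      assert ((a^2-2*b^2)^3 <= 0).
      { assert (hm' : a^2-2*b^2 <= 0) by lra.
        replace ((a^2-2*b^2)^3) with ((a^2-2*b^2)*(a^2-2*b^2)^2) by ring.
        assert (0 <= (a^2-2*b^2)^2) by apply pow2_ge_0. clear - hm' H1. nra. }
      assert (a^4*(a^2-2*b^2)^3 <= 0).
      { assert (0 < a^4) by (apply pow_lt; lra). clear - H1 H2. nra. }
      lra.
Qed.
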